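(* Let $\rho$ be a state of $A$ and $\sigma$ a state of $B$. Let $\mathcal{H}_S\subseteq\mathcal{H}_B$ be a subspace such that (1) $\mathcal{H}_B=\mathcal{H}_S\oplus\mathcal{H}_S^\perp$ with $U_B(g)=U_S(g)\oplus U_{S^\perp}(g)$ for all $g$ (i.e. $\mathcal{H}_S$ is invariant and carries the restricted representation $U_S$), and (2) $\Pi_S\sigma\Pi_S=\sigma$, where $\Pi_S$ is the projector onto $\mathcal{H}_S$. Let $S$ be the system with Hilbert space $\mathcal{H}_S$ and representation $U_S$. Then there exists a $G$-covariant channel from $A$ to $B$ mapping $\rho$ to $\sigma$ if and only if there exists a $G$-covariant channel from $A$ to $S$ mapping $\rho$ to $\sigma$.
   Context: $G$ is a compact group; finite-dimensional systems carry continuous unitary representations. A channel (CPTP map) $\mathcal{E}$ from system $X$ to system $Y$ is $G$-covariant if $\mathcal{E}(U_X(g)MU_X(g)^\dagger)=U_Y(g)\mathcal{E}(M)U_Y(g)^\dagger$ for all $g\in G$ and all operators $M$. *)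

(* Defs.v *)
From HB Require Import structures.
From mathcomp Require Import all_boot all_order all_algebra.
From mathcomp Require Import spectral.
From mathcomp Require Import complex mxtens.
From mathcomp Require Import all_classical topology.
From mathcomp Require Import Rstruct Rstruct_topology.

Set Implicit Arguments.
Unset Strict Implicit.
Unset Printing Implicit Defensive.

Import Order.TTheory GRing.Theory Num.Theory.
Local Open Scope ring_scope.

Notation Cplx := (Rdefinitions.R)[i].

Definition compact_group (G : topologicalType)
  (mul : G -> G -> G) (inv : G -> G) (one : G) : Prop :=
  [/\ (forall x y z, mul x (mul y z) = mul (mul x y) z),
      (forall x, mul one x = x /\ mul x one = x),
      (forall x, mul (inv x) x = one /\ mul x (inv x) = one),
      continuous (fun p : G * G => mul p.1 p.2) /\ continuous inv
    & compact [set: G] /\ hausdorff_space G].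

Definition adjmx m n (M : 'M[Cplx]_(m, n)) : 'M[Cplx]_(n, m) := (map_mx Num.conj M)^T.

Definition psdmx n (M : 'M[Cplx]_n) : Prop :=
  forall v : 'cV[Cplx]_n, 0 <= (adjmx v *m M *m v) 0 0.

Definition is_state n (rho : 'M[Cplx]_n) : Prop := psdmx rho /\ \tr rho = 1.

Definition unitary_rep (G : topologicalType) (mul : G -> G -> G) (one : G)
  n (U : G -> 'M[Cplx]_n) : Prop :=
  [/\ (forall g, U g \is unitarymx),
      (forall g h, U (mul g h) = U g *m U h),
      U one = 1%:M
    & (forall i j, continuous (fun g => complex.Re (U g i j)) /\
                   continuous (fun g => complex.Im (U g i j)))].

Definition mxblk k m (X : 'M[Cplx]_(k * m)) (i j : 'I_k) : 'M[Cplx]_m :=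
  \matrix_(a, b) X (mxtens_index (i, a)) (mxtens_index (j, b)).

(* the ampliation id_k (x) E *)
Definition ampl k m n (E : 'M[Cplx]_m -> 'M[Cplx]_n) (X : 'M[Cplx]_(k * m))
  : 'M[Cplx]_(k * n) :=
  \sum_(i < k) \sum_(j < k) (delta_mx i j : 'M[Cplx]_k) *t E (mxblk X i j).

Definition is_linear_map m n (E : 'M[Cplx]_m -> 'M[Cplx]_n) : Prop :=
  forall (a : Cplx) (M N : 'M[Cplx]_m), E (a *: M + N) = a *: E M + E N.

Definition completely_positive m n (E : 'M[Cplx]_m -> 'M[Cplx]_n) : Prop :=
  forall k (X : 'M[Cplx]_(k * m)), psdmx X -> psdmx (ampl E X).

Definition trace_preserving m n (E : 'M[Cplx]_m -> 'M[Cplx]_n) : Prop :=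
  forall M, \tr (E M) = \tr M.

Definition is_channel m n (E : 'M[Cplx]_m -> 'M[Cplx]_n) : Prop :=
  [/\ is_linear_map E, completely_positive E & trace_preserving E].

Definition covariant (G : Type) m n (UX : G -> 'M[Cplx]_m) (UY : G -> 'M[Cplx]_n)
  (E : 'M[Cplx]_m -> 'M[Cplx]_n) : Prop :=
  forall g M, E (UX g *m M *m adjmx (UX g)) = UY g *m E M *m adjmx (UY g).

Definition cov_convertible (G : Type) m n (UX : G -> 'M[Cplx]_m)
  (UY : G -> 'M[Cplx]_n) (rho : 'M[Cplx]_m) (sigma : 'M[Cplx]_n) : Prop :=
  exists E : 'M[Cplx]_m -> 'M[Cplx]_n,
    [/\ is_channel E, covariant UX UY E & E rho = sigma].

(* Main.v *)
Require Import Defs.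
From HB Require Import structures.
From mathcomp Require Import all_boot all_order all_algebra.
From mathcomp Require Import spectral.
From mathcomp Require Import complex mxtens.
From mathcomp Require Import all_classical topology.
From mathcomp Require Import Rstruct Rstruct_topology.
Import Order.TTheory GRing.Theory Num.Theory.
Local Open Scope ring_scope.

Lemma adjmxM m n p (A : 'M[Cplx]_(m, n)) (B : 'M[Cplx]_(n, p)) :
  adjmx (A *m B) = adjmx B *m adjmx A.
Proof. by rewrite /adjmx map_mxM trmx_mul. Qed.

Lemma adjmxK m n (A : 'M[Cplx]_(m, n)) : adjmx (adjmx A) = A.
Proof. by apply/matrixP=> i j; rewrite /adjmx !mxE conjCK. Qed.

Lemma adjmxD m n (A B : 'M[Cplx]_(m, n)) : adjmx (A + B) = adjmx A + adjmx B.
Proof. by apply/matrixP=> i j; rewrite /adjmx !mxE rmorphD. Qed.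

Lemma adjmxN m n (A : 'M[Cplx]_(m, n)) : adjmx (- A) = - adjmx A.
Proof. by apply/matrixP=> i j; rewrite /adjmx !mxE rmorphN. Qed.

Lemma adjmx1 n : adjmx (1%:M : 'M[Cplx]_n) = 1%:M.
Proof. by apply/matrixP=> i j; rewrite /adjmx !mxE rmorphMn rmorph1 eq_sym. Qed.

Lemma adjmx_delta m n (i : 'I_m) (j : 'I_n) : adjmx (delta_mx i j) = delta_mx j i.
Proof. by apply/matrixP=> a b; rewrite /adjmx !mxE rmorph_nat andbC. Qed.

Lemma adjmx_tens m n p q (A : 'M[Cplx]_(m, n)) (B : 'M[Cplx]_(p, q)) :
  adjmx (A *t B) = adjmx A *t adjmx B.
Proof. by rewrite /adjmx map_mxT trmx_tens. Qed.

Lemma psd_conj m n (M : 'M[Cplx]_m) (W : 'M[Cplx]_(n, m)) :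
  psdmx M -> psdmx (W *m M *m adjmx W).
Proof.
move=> HM v; have := HM (adjmx W *m v).
by rewrite adjmxM adjmxK !mulmxA.
Qed.

Lemma psd_add n (A B : 'M[Cplx]_n) : psdmx A -> psdmx B -> psdmx (A + B).
Proof.
move=> hA hB v; rewrite mulmxDr mulmxDl mxE; exact: addr_ge0.
Qed.

Lemma psd_scale n (c : Cplx) (A : 'M[Cplx]_n) : 0 <= c -> psdmx A -> psdmx (c *: A).
Proof.
move=> hc hA v; rewrite -scalemxAr -scalemxAl mxE; exact: mulr_ge0.
Qed.

Lemma psd0 n : psdmx (0 : 'M[Cplx]_n).
Proof. by move=> v; rewrite mulmx0 mul0mx mxE. Qed.

Lemma psd_sum n (I : finType) (F : I -> 'M[Cplx]_n) :
  (forall i, psdmx (F i)) -> psdmx (\sum_i F i).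
Proof.
move=> h; elim/big_ind: _ => //; [exact: psd0 | exact: psd_add].
Qed.

Lemma tensmxDr m n p q (A : 'M[Cplx]_(m, n)) (B C : 'M[Cplx]_(p, q)) :
  A *t (B + C) = A *t B + A *t C.
Proof. by apply/matrixP=> i j; rewrite !mxE mulrDr. Qed.

Lemma tensmxZr m n p q (A : 'M[Cplx]_(m, n)) (c : Cplx) (B : 'M[Cplx]_(p, q)) :
  A *t (c *: B) = c *: (A *t B).
Proof. by apply/matrixP=> i j; rewrite !mxE mulrCA. Qed.

Lemma tensmx_sumr m n p q (A : 'M[Cplx]_(m, n)) (I : finType) (F : I -> 'M[Cplx]_(p, q)) :
  A *t (\sum_i F i) = \sum_i (A *t F i).
Proof.
apply: (big_morph (fun B => A *t B)); [exact: tensmxDr | exact: tensmx0].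
Qed.

Lemma ampl_ext k m n (E F : 'M[Cplx]_m -> 'M[Cplx]_n) (X : 'M[Cplx]_(k * m)) :
  (forall M, E M = F M) -> ampl E X = ampl F X.
Proof. by move=> h; rewrite /ampl; apply: eq_bigr => i _; apply: eq_bigr => j _; rewrite h. Qed.

Lemma ampl_conj k m n p (F : 'M[Cplx]_m -> 'M[Cplx]_n) (W : 'M[Cplx]_(p, n))
  (X : 'M[Cplx]_(k * m)) :
  ampl (fun M => W *m F M *m adjmx W) X =
  (1%:M *t W) *m ampl F X *m adjmx (1%:M *t W).
Proof.
rewrite adjmx_tens adjmx1 /ampl mulmx_sumr mulmx_suml; apply: eq_bigr => i _.
rewrite mulmx_sumr mulmx_suml; apply: eq_bigr => j _.
by rewrite !tensmx_mul mul1mx mulmx1.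
Qed.

Lemma ampl_add k m n (E F : 'M[Cplx]_m -> 'M[Cplx]_n) (X : 'M[Cplx]_(k * m)) :
  ampl (fun M => E M + F M) X = ampl E X + ampl F X.
Proof.
rewrite /ampl -big_split; apply: eq_bigr => i _.
rewrite -big_split; apply: eq_bigr => j _; exact: tensmxDr.
Qed.

Lemma ampl_scale k m n (c : Cplx) (E : 'M[Cplx]_m -> 'M[Cplx]_n) (X : 'M[Cplx]_(k * m)) :
  ampl (fun M => c *: E M) X = c *: ampl E X.
Proof.
rewrite /ampl scaler_sumr; apply: eq_bigr => i _.
rewrite scaler_sumr; apply: eq_bigr => j _; exact: tensmxZr.
Qed.

Lemma ampl_sum k m n (I : finType) (E : I -> 'M[Cplx]_m -> 'M[Cplx]_n) (X : 'M[Cplx]_(k * m)) :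
  ampl (fun M => \sum_l E l M) X = \sum_l ampl (E l) X.
Proof.
rewrite /ampl [RHS]exchange_big; apply: eq_bigr => i _ /=.
rewrite [RHS]exchange_big; apply: eq_bigr => j _; exact: tensmx_sumr.
Qed.

Lemma cp_conj m n p (F : 'M[Cplx]_m -> 'M[Cplx]_n) (W : 'M[Cplx]_(p, n)) :
  completely_positive F -> completely_positive (fun M => W *m F M *m adjmx W).
Proof. by move=> hF k X hX; rewrite ampl_conj; apply: psd_conj; apply: hF. Qed.

Lemma cp_add m n (E F : 'M[Cplx]_m -> 'M[Cplx]_n) :
  completely_positive E -> completely_positive F ->
  completely_positive (fun M => E M + F M).
Proof. by move=> hE hF k X hX; rewrite ampl_add; apply: psd_add; auto. Qed.

Lemma cp_scale m n (c : Cplx) (E : 'M[Cplx]_m -> 'M[Cplx]_n) :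
  0 <= c -> completely_positive E -> completely_positive (fun M => c *: E M).
Proof. by move=> hc hE k X hX; rewrite ampl_scale; apply: psd_scale; auto. Qed.

Lemma cp_sum m n (I : finType) (E : I -> 'M[Cplx]_m -> 'M[Cplx]_n) :
  (forall l, completely_positive (E l)) ->
  completely_positive (fun M => \sum_l E l M).
Proof. by move=> hE k X hX; rewrite ampl_sum; apply: psd_sum => l; apply: hE. Qed.

Lemma cp_ext m n (E F : 'M[Cplx]_m -> 'M[Cplx]_n) :
  (forall M, E M = F M) -> completely_positive F -> completely_positive E.
Proof. by move=> h hF k X hX; rewrite (@ampl_ext k m n E F X h); apply: hF. Qed.

Lemma delta_conj p n (A : 'M[Cplx]_n) (s : 'I_p) (b : 'I_n) :
  delta_mx s b *m A *m delta_mx b s = A b b *: delta_mx s s.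
Proof.
apply/matrixP=> i j; rewrite !mxE (bigD1 b) //= big1 => [|k kb]; last first.
  by rewrite !mxE (negPf kb) /= mulr0.
rewrite addr0 !mxE eqxx /= (bigD1 b) //= big1 => [|l lb]; last first.
  by rewrite !mxE (negPf lb) andbF mul0r.
rewrite addr0 !mxE eqxx andbT.
by case: (i == s); case: (j == s); rewrite /= ?mul0r ?mulr0 ?mul1r ?mulr1.
Qed.

Lemma trace_kraus n p (Q Y : 'M[Cplx]_n) :
  \sum_(s : 'I_p) \sum_(b : 'I_n) (delta_mx s b *m Q) *m Y *m adjmx (delta_mx s b *m Q)
  = (\tr (Q *m Y *m adjmx Q)) *: 1%:M.
Proof.
rewrite (mx1_sum_delta _ p) scaler_sumr; apply: eq_bigr => s _.
rewrite /mxtrace scaler_suml; apply: eq_bigr => b _.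
by rewrite adjmxM adjmx_delta !mulmxA -(mulmxA _ Q) -(mulmxA _ (Q *m Y)) delta_conj.
Qed.

Lemma unit_adj n (U : 'M[Cplx]_n) :
  U \is unitarymx -> U *m adjmx U = 1%:M /\ adjmx U *m U = 1%:M.
Proof.
move=> /unitarymxP h.
have e : adjmx U = (U ^t*)%sesqui by apply/matrixP => i j; rewrite !mxE.
have h1 : U *m adjmx U = 1%:M by rewrite e.
by split => //; apply: mulmx1C.
Qed.

Theorem lemma6 (G : topologicalType) (mul : G -> G -> G) (inv : G -> G) (one : G)
  (dA dB dS : nat)
  (UA : G -> 'M[Cplx]_dA) (UB : G -> 'M[Cplx]_dB) (US : G -> 'M[Cplx]_dS)
  (V : 'M[Cplx]_(dB, dS))
  (rho : 'M[Cplx]_dA) (sigma : 'M[Cplx]_dB) :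
  compact_group mul inv one ->
  unitary_rep mul one UA -> unitary_rep mul one UB -> unitary_rep mul one US ->
  adjmx V *m V = 1%:M ->
  (forall g, UB g *m V = V *m US g) ->
  is_state rho -> is_state sigma ->
  (V *m adjmx V) *m sigma *m (V *m adjmx V) = sigma ->
  (cov_convertible UA UB rho sigma <->
   cov_convertible UA US rho (adjmx V *m sigma *m V)).
Proof.
move=> _ [uA _ _ _] [uB _ _ _] [uS _ _ _] VV HUV [rpsd rtr] [spsd str] Hsig.
have H2 g : adjmx (UB g) *m V = V *m adjmx (US g).
  have [uS1 uS2] := unit_adj _ _ (uS g); have [uB1 uB2] := unit_adj _ _ (uB g).
  by rewrite -[LHS]mulmx1 -uS1 mulmxA -(mulmxA _ V) -HUV mulmxA uB2 mul1mx.
have H3 g : adjmx V *m UB g = US g *m adjmx V.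
  by have := congr1 (@adjmx _ _) (H2 g); rewrite !adjmxM !adjmxK.
split.
- move=> [E [[linE cpE tpE] covE ER]].
  pose Q := 1%:M - V *m adjmx V.
  have PP : V *m adjmx V *m (V *m adjmx V) = V *m adjmx V.
    by rewrite -mulmxA (mulmxA (adjmx V)) VV mul1mx.
  have adjQ : adjmx Q = Q by rewrite /Q adjmxD adjmxN adjmx1 adjmxM adjmxK.
  have QQ : Q *m Q = Q.
    by rewrite /Q mulmxBl !mulmxBr !mul1mx !mulmx1 PP subrr subr0.
  have QP : Q *m (V *m adjmx V) = 0 by rewrite /Q mulmxBl mul1mx PP subrr.
  have HQ g : Q *m UB g = UB g *m Q.
    rewrite /Q mulmxBl mulmxBr mul1mx mulmx1; congr (_ - _).
    by rewrite -mulmxA H3 mulmxA -HUV mulmxA.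
  have hdS : (dS%:R : Cplx) != 0.
    rewrite pnatr_eq0; apply/negP => /eqP h0.
    have : \tr (adjmx V *m sigma *m V) = 1.
      have e1 : \tr (V *m adjmx V *m sigma *m (V *m adjmx V)) = \tr (V *m adjmx V *m sigma) by rewrite mxtrace_mulC mulmxA PP.
      by rewrite -str -[in RHS]Hsig e1 mxtrace_mulC mulmxA.
    rewrite /mxtrace big1 => [|i _]; first by move/eqP; rewrite eq_sym oner_eq0.
    by exfalso; move: (ltn_ord i); move: (nat_of_ord i) => k; rewrite h0.
  pose c : Cplx := (dS%:R)^-1.
  exists (fun M => adjmx V *m E M *m V + (c * \tr (Q *m E M *m Q)) *: 1%:M).
  split; first split.
  + move=> a M N; rewrite linE mulmxDr mulmxDl -scalemxAr -scalemxAl.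
    rewrite (mulmxDr Q) (mulmxDl _ _ Q) -(scalemxAr a Q) -scalemxAl mxtraceD mxtraceZ.
    by rewrite mulrDr scalerDl scalerDr scalerA mulrCA addrACA.
  + apply: (cp_ext _ _ _ (fun M => adjmx V *m E M *m adjmx (adjmx V) + c *:
       \sum_(s : 'I_dS) \sum_(b : 'I_dB)
          (delta_mx s b *m Q) *m E M *m adjmx (delta_mx s b *m Q))).
      by move=> M; rewrite adjmxK trace_kraus adjQ scalerA.
    apply: cp_add; first exact: cp_conj.
    apply: cp_scale; first by rewrite invr_ge0 ler0n.
    apply: cp_sum => s; apply: cp_sum => b; exact: cp_conj.
  + move=> M; rewrite mxtraceD mxtraceZ mxtrace1 mulrAC mulVf // mul1r.
    have t1 : \tr (adjmx V *m E M *m V) = \tr (V *m adjmx V *m E M).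
      by rewrite mxtrace_mulC mulmxA.
    have t2 : \tr (Q *m E M *m Q) = \tr (Q *m E M).
      by rewrite mxtrace_mulC mulmxA QQ.
    by rewrite t1 t2 -mxtraceD -mulmxDl /Q addrC subrK mul1mx tpE.
  + move=> g M /=; rewrite covE.
    have [uS1 uS2] := unit_adj _ _ (uS g); have [uB1 uB2] := unit_adj _ _ (uB g).
    have HQ' : adjmx (UB g) *m Q = Q *m adjmx (UB g).
      by have := congr1 (@adjmx _ _) (HQ g); rewrite !adjmxM adjQ.
    have e1 : adjmx V *m (UB g *m E M *m adjmx (UB g)) *m V =
              US g *m (adjmx V *m E M *m V) *m adjmx (US g).
      by rewrite !mulmxA H3 -!mulmxA H2.
    have e2 : \tr (Q *m (UB g *m E M *m adjmx (UB g)) *m Q) = \tr (Q *m E M *m Q).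
      rewrite !mulmxA HQ -(mulmxA _ (adjmx (UB g))) HQ' mulmxA mxtrace_mulC.
      by rewrite !mulmxA uB2 mul1mx.
    rewrite e1 e2 mulmxDr mulmxDl -scalemxAr -scalemxAl mulmx1 uS1.
    by [].
  + rewrite /= ER.
    have -> : Q *m sigma *m Q = 0 by rewrite -Hsig !mulmxA -(mulmxA Q V) QP !mul0mx.
    by rewrite mxtrace0 mulr0 scale0r addr0.
- move=> [F [[linF cpF tpF] covF FR]].
  exists (fun M => V *m F M *m adjmx V); split.
  + split.
    * by move=> a M N; rewrite linF mulmxDr mulmxDl -scalemxAr -scalemxAl.
    * exact: cp_conj.
    * by move=> M; rewrite mxtrace_mulC mulmxA VV mul1mx tpF.
  + move=> g M /=; rewrite covF !mulmxA -HUV -!mulmxA -adjmxM.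
    by rewrite -HUV adjmxM.
  + by rewrite /= FR -[RHS]Hsig !mulmxA.
Qed.
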